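(* Let $a,r$ be real numbers with $0<a<a+r<1$ and let $c=b_{\mathbb{D},2}(a,a+r)$. Then \[ \{z:|z-a|<r\}\subset B_{\mathbb{D},2}(a;c)\subset\{z:|z|<a+r\}. \]
   Context: $\mathbb{D}=\{z\in\mathbb{C}:|z|<1\}$. For $z_1,z_2\in\mathbb{D}$, $b_{\mathbb{D},2}(z_1,z_2)=\sup_{z\in\partial\mathbb{D}}\frac{|z_1-z_2|}{\sqrt{|z_1-z|^2+|z-z_2|^2}}$, and $B_{\mathbb{D},2}(a;c)=\{z\in\mathbb{D}: b_{\mathbb{D},2}(a,z)<c\}$. *)

(* Defs.v *)
From mathcomp Require Import all_boot all_order all_algebra.
From mathcomp Require Import all_classical all_reals.
From mathcomp Require Export complex.
Set Implicit Arguments. Unset Strict Implicit. Unset Printing Implicit Defensive.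
Import Order.TTheory GRing.Theory Num.Theory.
Local Open Scope ring_scope.
Local Open Scope classical_set_scope.

Definition cabs (R : realType) (z : R[i]) : R := ComplexField.Normc.normc z.

Definition unit_disk (R : realType) (z : R[i]) : Prop := cabs z < 1.

Definition bD2 (R : realType) (z1 z2 : R[i]) : R :=
  sup [set cabs (z1 - z2) / Num.sqrt (cabs (z1 - z) ^+ 2 + cabs (z - z2) ^+ 2)
      | z in [set z : R[i] | cabs z = 1]].

Definition BD2 (R : realType) (a : R[i]) (c : R) : set R[i] :=
  [set z | unit_disk z /\ bD2 a z < c].

(* Main.v *)
Require Import Defs.
From mathcomp Require Import all_boot all_order all_algebra.
From mathcomp Require Import all_classical all_reals.
From mathcomp Require Import complex.
From mathcomp Require Import ring lra.
Import Order.TTheory GRing.Theory Num.Theory.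
Local Open Scope ring_scope.
Local Open Scope classical_set_scope.

Lemma cabs_ge0 {R : realType} (z : R[i]) : 0 <= cabs z.
Proof. by case: z => x y; rewrite /cabs /= sqrtr_ge0. Qed.

Lemma cabs2 {R : realType} (z : R[i]) : cabs z ^+ 2 = complex.Re z ^+ 2 + complex.Im z ^+ 2.
Proof. by case: z => x y; rewrite /cabs /= sqr_sqrtr // addr_ge0 // sqr_ge0. Qed.

Lemma cabsN {R : realType} (z : R[i]) : cabs (- z) = cabs z.
Proof. exact: normcN. Qed.

Lemma cabsD {R : realType} (x y : R[i]) : cabs (x + y) <= cabs x + cabs y.
Proof. exact: le_normcD. Qed.

Lemma cabsB_sym {R : realType} (x y : R[i]) : cabs (x - y) = cabs (y - x).
Proof. by rewrite -opprB cabsN. Qed.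

Lemma cabsM {R : realType} (x y : R[i]) : cabs (x * y) = cabs x * cabs y.
Proof. exact: ComplexField.Normc.normcM. Qed.

Lemma cabsR {R : realType} (k : R) : cabs (k%:C)%C = `|k|.
Proof. by rewrite /cabs /= expr0n /= addr0 sqrtr_sqr. Qed.

Lemma cabs1 {R : realType} : cabs (1 : R[i]) = 1.
Proof. exact: ComplexField.Normc.normc1. Qed.

Lemma cabs_ww {R : realType} (w : R[i]) : cabs (w + w) = 2 * cabs w.
Proof.
case: w => x y; rewrite /cabs /=.
have -> : (x + x) ^+ 2 + (y + y) ^+ 2 = 2 ^+ 2 * (x ^+ 2 + y ^+ 2) by ring.
by rewrite sqrtrM ?sqr_ge0 // sqrtr_sqr ger0_norm.
Qed.

Lemma par {R : realType} (z1 z2 w : R[i]) :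
  cabs (z1 - w) ^+ 2 + cabs (w - z2) ^+ 2 =
  (cabs (z1 + z2 - (w + w)) ^+ 2 + cabs (z1 - z2) ^+ 2) / 2.
Proof.
case: z1 => a b; case: z2 => c d; case: w => e f; rewrite !cabs2 /=.
field; by [].
Qed.

Lemma LB {R : realType} (z1 z2 w : R[i]) : cabs w = 1 ->
  2 - cabs (z1 + z2) <= cabs (z1 + z2 - (w + w)).
Proof.
move=> hw.
have := cabsD (z1 + z2) (- (z1 + z2 - (w + w))).
rewrite opprB addrC subrK (cabsB_sym (w + w)) cabs_ww hw; lra.
Qed.

Lemma attained {R : realType} (z1 z2 : R[i]) : cabs (z1 + z2) < 2 ->
  exists w, cabs w = 1 /\ cabs (z1 + z2 - (w + w)) = 2 - cabs (z1 + z2).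
Proof.
set u := z1 + z2; set s := cabs u => hs.
have s0 := cabs_ge0 u.
have [s_eq0|s_gt0] := eqVneq s 0.
  have u0 : u = 0 by apply: ComplexField.Normc.eq0_normc.
  exists 1; rewrite cabs1 u0 sub0r cabsN cabs_ww cabs1 s_eq0; split => //; lra.
have sp : 0 < s by rewrite lt_def s_gt0 s0.
set k := s^-1.
have sk : s * k = 1 by rewrite /k mulfV.
have kp : 0 < k by rewrite /k invr_gt0.
exists (u * k%:C)%C; split.
  by rewrite cabsM cabsR gtr0_norm.
have -> : u - (u * k%:C + u * k%:C)%C = u * ((1 - k - k)%:C)%C.
  by rewrite !rmorphB /= rmorph1; ring.
rewrite cabsM cabsR ler0_norm; last by nra.
have -> : s * - (1 - k - k) = 2 * (s * k) - s by ring.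
rewrite sk; lra.
Qed.

Definition G {R : realType} (d s : R) : R := d / Num.sqrt (((2 - s) ^+ 2 + d ^+ 2) / 2).

Lemma bD2_eq {R : realType} (z1 z2 : R[i]) : cabs (z1 + z2) < 2 ->
  bD2 z1 z2 = G (cabs (z1 - z2)) (cabs (z1 + z2)).
Proof.
move=> hs.
set d := cabs (z1 - z2); set s := cabs (z1 + z2).
rewrite -/s in hs.
have d0 : 0 <= d := cabs_ge0 _.
have s0 : 0 <= s := cabs_ge0 _.
have Mp : 0 < ((2 - s) ^+ 2 + d ^+ 2) / 2.
  apply: divr_gt0 => //; apply: ltr_wpDr; first exact: sqr_ge0.
  by rewrite exprn_gt0 // subr_gt0.
have key : forall w, cabs w = 1 ->
    d / Num.sqrt (cabs (z1 - w) ^+ 2 + cabs (w - z2) ^+ 2) <= G d s.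
  move=> w hw; rewrite par.
  have t1 := @LB R z1 z2 w hw.
  rewrite -/d -/s in t1 *.
  have tp := cabs_ge0 (z1 + z2 - (w + w)).
  set t := cabs (z1 + z2 - (w + w)) in t1 tp *.
  have hle : ((2 - s) ^+ 2 + d ^+ 2) / 2 <= (t ^+ 2 + d ^+ 2) / 2.
    rewrite ler_pM2r ?invr_gt0 // lerD2r.
    rewrite ler_pXn2r // ?nnegrE; lra.
  have sqM : 0 < Num.sqrt (((2 - s) ^+ 2 + d ^+ 2) / 2) by rewrite sqrtr_gt0.
  have sqE : 0 < Num.sqrt ((t ^+ 2 + d ^+ 2) / 2).
    by rewrite sqrtr_gt0; apply: lt_le_trans hle.
  rewrite /G ler_pdivrMr // mulrAC ler_pdivlMr //.
  apply: ler_pM => //; first exact: sqrtr_ge0. rewrite ler_sqrt //; apply: le_trans hle; exact: ltW.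
have ne : [set d / Num.sqrt (cabs (z1 - w) ^+ 2 + cabs (w - z2) ^+ 2)
          | w in [set w : R[i] | cabs w = 1]] !=set0.
  by exists (d / Num.sqrt (cabs (z1 - 1) ^+ 2 + cabs (1 - z2) ^+ 2)); exists 1 => //; exact: cabs1.
have ub : ubound [set d / Num.sqrt (cabs (z1 - w) ^+ 2 + cabs (w - z2) ^+ 2)
          | w in [set w : R[i] | cabs w = 1]] (G d s).
  by move=> x [w hw <-]; apply: key.
rewrite /bD2 -/d; apply/le_anti/andP; split.
  exact: ge_sup.
have [w0 [hw0 hw0e]] := attained z1 z2 hs.
apply: (ub_le_sup (ex_intro _ _ ub)).
by exists w0 => //; rewrite par hw0e.
Qed.

Lemma Gcmp {R : realType} (d s d0 s0 : R) : 0 <= d -> 0 <= d0 -> s < 2 -> s0 < 2 ->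
  (G d s < G d0 s0) = (d * (2 - s0) < d0 * (2 - s)).
Proof.
move=> hd hd0 hs hs0.
have Mp : forall d s : R, s < 2 -> 0 < ((2 - s) ^+ 2 + d ^+ 2) / 2.
  move=> e t ht; apply: divr_gt0 => //; apply: ltr_wpDr; first exact: sqr_ge0.
  by rewrite exprn_gt0 // subr_gt0.
have G0 : forall d s : R, 0 <= d -> 0 <= G d s.
  by move=> e t he; rewrite /G divr_ge0 // sqrtr_ge0.
rewrite -(ltr_pXn2r (n:=2)) // ?nnegrE ?G0 //.
rewrite /G !expr_div_n !sqr_sqrtr ?ltW ?Mp //.
rewrite ltr_pdivrMr ?Mp // mulrAC ltr_pdivlMr ?Mp //.
rewrite !mulrA ltr_pM2r ?invr_gt0 //.
have X0 : 0 <= d * (2 - s0) by apply: mulr_ge0 => //; lra.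
have Y0 : 0 <= d0 * (2 - s) by apply: mulr_ge0 => //; lra.
apply/idP/idP => h.
  rewrite ltNge; apply/negP => h2.
  have : (d0 * (2 - s)) ^+ 2 <= (d * (2 - s0)) ^+ 2 by rewrite ler_pXn2r // inE.
  move: h; nra.
have : (d * (2 - s0)) ^+ 2 < (d0 * (2 - s)) ^+ 2 by rewrite ltr_pXn2r // inE.
nra.
Qed.

Theorem theorem3p16 (R : realType) (a r : R) :
  0 < a -> a < a + r -> a + r < 1 ->
  let c := bD2 (a%:C)%C ((a + r)%:C)%C in
  [set z : R[i] | cabs (z - (a%:C)%C) < r] `<=` BD2 (a%:C)%C c /\
  BD2 (a%:C)%C c `<=` [set z : R[i] | cabs z < a + r].
Proof.
move=> ha har har1 c.
have rp : 0 < r by lra.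
have Hc : c = G r (2 * a + r).
  have e1 : (a%:C + (a + r)%:C)%C = ((2 * a + r)%:C)%C.
    by rewrite -rmorphD /=; congr (_%:C)%C; ring.
  have e2 : (a%:C - (a + r)%:C)%C = ((- r)%:C)%C.
    by rewrite -rmorphB /=; congr (_%:C)%C; ring.
  rewrite /c bD2_eq e1 ?e2 cabsR ?normrN ?ger0_norm //; try lra.
  by rewrite cabsR ger0_norm //; lra.
have caR : cabs (a%:C)%C = a by rewrite cabsR gtr0_norm.
split.
  move=> z /= hz; split.
    rewrite /unit_disk.
    have := cabsD (z - a%:C)%C (a%:C)%C; rewrite subrK caR; lra.
  have hs : cabs (a%:C + z)%C <= cabs (z - a%:C)%C + 2 * a.
    have -> : (a%:C + z)%C = (z - a%:C)%C + (a%:C + a%:C)%C by ring.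
    by have := cabsD (z - a%:C)%C (a%:C + a%:C)%C; rewrite cabs_ww caR.
  have d0 := cabs_ge0 (z - a%:C)%C.
  rewrite bD2_eq; last lra.
  rewrite Hc Gcmp ?cabs_ge0 //; try lra.
  rewrite cabsB_sym; nra.
move=> z [] /=; rewrite /unit_disk => hz hb.
have hs : cabs (a%:C + z)%C <= a + cabs z.
  by have := cabsD (a%:C)%C z; rewrite caR.
have sz := cabs_ge0 z.
rewrite bD2_eq in hb; last lra.
rewrite Hc Gcmp ?cabs_ge0 in hb; try lra.
rewrite cabsB_sym in hb.
set d := cabs (z - a%:C)%C in hb *; set s := cabs (a%:C + z)%C in hs hb *.
have h1 : cabs z <= d + a.
  by have := cabsD (z - a%:C)%C (a%:C)%C; rewrite subrK caR.
have h2 : 2 * cabs z <= s + d.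
  have := cabsD (a%:C + z)%C (z - a%:C)%C.
  have -> : (a%:C + z + (z - a%:C))%C = z + z by ring.
  by rewrite cabs_ww.
rewrite ltNge; apply/negP => hge.
have p1 : 0 <= (d - r) * (2 - 2 * a - 2 * r) by apply: mulr_ge0; lra.
have p2 : 0 <= r * (s + d - 2 * cabs z) by apply: mulr_ge0; lra.
have p3 : 0 <= r * (cabs z - (a + r)) by apply: mulr_ge0; lra.
nra.
Qed.
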